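(* Let $K>1$ and $\alpha_1,\dots,\alpha_K>0$, and let $p_0^{(k)} = \mathcal{N}(\mathbf{0}, \alpha_k \mathbf{I})$ on $\mathbb{R}^d$ for all $k \leq K$. Denote the Product of Experts (PoE) of these distributions by $p^{\mathrm{PoE}}_0 \coloneqq \mathrm{PoE}(p_0^{(1)}, \dots, p_0^{(K)})$. For any density $q_0$, write $q_t$ for the marginal distribution at time $t$ obtained by diffusing $q_0$ under the forward Variance Preserving SDE $\mathrm{d}\mathbf{z}_t = -\beta_t \mathbf{z}_t\,\mathrm{d}t + \sqrt{2\beta_t}\,\mathrm{d}\mathbf{w}_t$, $0\le t\le T$, $\mathbf{z}_0\sim q_0$ (so $p^{\mathrm{PoE}}_t$ is the diffusion of $p^{\mathrm{PoE}}_0$ and $p^{(k)}_t$ is the diffusion of $p^{(k)}_0$). Then, for any $t>0$, $p^{\mathrm{PoE}}_t \neq \mathrm{PoE}(p^{(1)}_t, \dots, p^{(K)}_t)$ unless $\alpha_1 = \dots = \alpha_K$.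
   Context: The Product of Experts of $K$ densities $p^{(1)},\dots,p^{(K)}$ on $\mathbb{R}^d$ is their normalized geometric mean: $\mathrm{PoE}(p^{(1)},\dots,p^{(K)})(\mathbf{x}) \coloneqq \sqrt[K]{p^{(1)}(\mathbf{x})\cdots p^{(K)}(\mathbf{x})}/Z_K$ with $Z_K = \int \sqrt[K]{p^{(1)}(\mathbf{x})\cdots p^{(K)}(\mathbf{x})}\,\mathrm{d}\mathbf{x}$. Its score is the arithmetic mean of the individual scores. Under the VP SDE above, the strong solution is $\mathbf{z}_t = \gamma_t \mathbf{z}_0 + \eta_t$ with deterministic $\gamma_t\in(0,1)$ and Gaussian noise $\eta_t$ independent of $\mathbf{z}_0$, so that if $\mathbf{z}_0\sim\mathcal{N}(\mathbf{0},\boldsymbol{\Sigma})$ then $\mathbf{z}_t\sim\mathcal{N}(\mathbf{0},\gamma_t\boldsymbol{\Sigma}+(1-\gamma_t)\mathbf{I})$. *)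

(* Defs.v *)
From HB Require Import structures.
From mathcomp Require Import all_boot all_order all_algebra.
From mathcomp Require Import all_classical all_reals all_analysis.
Set Implicit Arguments. Unset Strict Implicit. Unset Printing Implicit Defensive.
Import Order.TTheory GRing.Theory Num.Theory.
Local Open Scope classical_set_scope.
Local Open Scope ring_scope.

(* Integral over R^d of a function with values in \bar R, defined as the
   iterated one-dimensional Lebesgue integral (for nonnegative measurable
   integrands this is the integral w.r.t. d-dimensional Lebesgue measure,
   by Tonelli). *)
Fixpoint intRd {R : realType} (d : nat) : (d.-tuple R -> \bar R) -> \bar R :=
  match d return (d.-tuple R -> \bar R) -> \bar R with
  | 0%N => fun f => f [tuple]
  | d'.+1 => fun f =>
      (\int[@lebesgue_measure R]_x intRd (fun t : d'.-tuple R => f [tuple of x :: t]))%E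
  end.

Definition sqnorm {R : realType} (d : nat) (x : d.-tuple R) : R :=
  \sum_(i < d) (tnth x i) ^+ 2.

Definition tsub {R : realType} (d : nat) (x y : d.-tuple R) : d.-tuple R :=
  [tuple tnth x i - tnth y i | i < d].

Definition tscale {R : realType} (d : nat) (c : R) (y : d.-tuple R) : d.-tuple R :=
  [tuple c * tnth y i | i < d].

Definition gauss_density {R : realType} (d : nat) (v : R) (x : d.-tuple R) : R :=
  (Num.sqrt (2 * pi * v)) ^- d * expR (- sqnorm x / (2 * v)).

Definition PoE_unnorm {R : realType} (d K : nat) (p : 'I_K -> d.-tuple R -> R)
    (x : d.-tuple R) : R :=
  (\prod_(k < K) p k x) `^ (K%:R^-1).

Definition PoE {R : realType} (d K : nat) (p : 'I_K -> d.-tuple R -> R)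
    (x : d.-tuple R) : R :=
  PoE_unnorm p x / fine (intRd (fun y => (PoE_unnorm p y)%:E)).

(* VP SDE  dz = -beta_t z dt + sqrt(2 beta_t) dw :
   with B_t = int_0^t beta_s ds, its solution is
   z_t = exp(-B_t) z_0 + eta_t, eta_t ~ N(0, (1 - exp(-2 B_t)) I) independent of z_0. *)
Definition Bint {R : realType} (beta : R -> R) (t : R) : R :=
  fine (\int[@lebesgue_measure R]_(s in `[0%R, t]) (beta s)%:E)%E.

Definition vp_diffuse {R : realType} (d : nat) (beta : R -> R) (t : R)
    (q0 : d.-tuple R -> R) (x : d.-tuple R) : R :=
  fine (intRd (fun y : d.-tuple R =>
    (q0 y * gauss_density (1 - expR (- (2 * Bint beta t)))
                          (tsub x (tscale (expR (- Bint beta t)) y)))%:E)).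

(* Main.v *)
Require Import Defs.
From HB Require Import structures.
From mathcomp Require Import all_boot all_order all_algebra.
From mathcomp Require Import all_classical all_reals all_analysis.
From mathcomp Require Import normal_distribution measurable_realfun.
From mathcomp Require Import ring lra.
Import Order.TTheory GRing.Theory Num.Theory.
Local Open Scope classical_set_scope.
Local Open Scope ring_scope.

Section S.
Context {R : realType}.
Notation mu := (@lebesgue_measure R).


Definition J (a : R) : R := (normal_peak (Num.sqrt ((2*a)^-1)))^-1.

Lemma J_gt0 a : 0 < a -> 0 < J a.
Proof.
move=> a0; rewrite /J invr_gt0 normal_peak_gt0 // gt_eqF // sqrtr_gt0 invr_gt0.
by rewrite mulr_gt0.
Qed.

Lemma int1 (a m : R) : 0 < a ->
  (\int[mu]_x (expR (- a * (x - m) ^+ 2))%:E = (J a)%:E)%E.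
Proof.
move=> a0.
have s0 : Num.sqrt ((2*a)^-1) != 0 by rewrite gt_eqF // sqrtr_gt0 invr_gt0 mulr_gt0.
have hp : 0 < normal_peak (Num.sqrt ((2*a)^-1)) by exact: normal_peak_gt0.
transitivity (\int[mu]_x ((J a)%:E * (normal_pdf m (Num.sqrt ((2*a)^-1)) x)%:E))%E.
  apply: eq_integral => x _; rewrite -EFinM normal_pdfE //; congr EFin.
  rewrite /J mulKf ?gt_eqF // /normal_fun.

  congr expR; rewrite sqr_sqrtr ?invr_ge0 ?mulr_ge0 ?ltW //.
  by rewrite -mulr_natr; field; rewrite gt_eqF.
rewrite integralZl //; last exact: integrable_normal_pdf.
by rewrite integral_normal_pdf mule1.
Qed.

Lemma intRd_prod d (h : nat -> R -> R) (I : nat -> R) (c : R) :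
 0 <= c -> (forall i x, 0 <= h i x) -> (forall i, measurable_fun setT (h i)) ->
 (forall i, (\int[mu]_x (h i x)%:E = (I i)%:E)%E) ->
 intRd (fun y : d.-tuple R => (c * \prod_(i < d) h i (tnth y i))%:E) =
   (c * \prod_(i < d) I i)%:E.
Proof.
elim: d h I c => [|d IH] h I c c0 h0 hm hI /=; first by rewrite !big_ord0.
have I0 i : 0 <= I i by rewrite -lee_fin -hI integral_ge0 // => x _; rewrite lee_fin.
transitivity (\int[mu]_x ((c * \prod_(i < d) I i.+1)%:E * (h 0%N x)%:E))%E.
  apply: eq_integral => x _.
  have -> : (fun t : d.-tuple R => (c * \prod_(i < d.+1) h i (tnth [tuple of x :: t] i))%:E)
     = (fun t : d.-tuple R => ((c * h 0%N x) * \prod_(i < d) h i.+1 (tnth t i))%:E).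
    apply: funext => t; rewrite big_ord_recl mulrA; congr (_ * _ * _)%:E.
    by apply: eq_bigr => i _; rewrite tnthS.
  rewrite (IH (fun i => h i.+1) (fun i => I i.+1)) //; last by rewrite mulr_ge0.
  by rewrite -EFinM; congr EFin; ring.
rewrite ge0_integralZl_EFin //; last 3 first.
- by move=> x _; rewrite lee_fin.
- by apply/measurable_EFinP; exact: hm.
- by rewrite mulr_ge0 // prodr_ge0.
by rewrite hI -EFinM big_ord_recl; congr EFin; ring.
Qed.

Lemma intRd_gauss d (a c : R) (m : nat -> R) : 0 < a -> 0 <= c ->
  intRd (fun y : d.-tuple R =>
     (c * expR (- a * \sum_(i < d) (tnth y i - m i) ^+ 2))%:E) = (c * J a ^+ d)%:E.
Proof.
move=> a0 c0.
have H := @intRd_prod d (fun i x => expR (- a * (x - m i) ^+ 2)) (fun _ => J a) c c0.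
rewrite prodr_const card_ord in H; rewrite -H.
- by congr intRd; apply: funext => y; rewrite mulr_sumr expR_sum.
- by move=> i x; exact: expR_ge0.
- move=> i; apply: measurableT_comp => //; apply: measurable_funM => //.
  by apply: measurable_funX; apply: measurable_funB.
- by move=> i; exact: int1.
Qed.

Lemma sqnorm_sum d (y : d.-tuple R) :
  sqnorm y = \sum_(i < d) (tnth y i - (fun _ => 0) i) ^+ 2.
Proof. by rewrite /sqnorm; apply: eq_bigr => i _; rewrite subr0. Qed.

Lemma sum_gt0 K (e : 'I_K -> R) : (0 < K)%N -> (forall k, 0 < e k) -> 0 < \sum_k e k.
Proof.
move=> K0 e0; pose k0 := Ordinal K0.
rewrite (bigD1 k0) //=.
have h1 := e0 k0.
have h2 : 0 <= \sum_(i | i != k0) e i by apply: sumr_ge0 => i _; exact: ltW.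
lra.
Qed.

Definition ebar {K} (e : 'I_K -> R) := K%:R^-1 * \sum_k e k.

Lemma ebar_gt0 K (e : 'I_K -> R) : (0 < K)%N -> (forall k, 0 < e k) -> 0 < ebar e.
Proof.
by move=> K0 e0; rewrite /ebar mulr_gt0 ?invr_gt0 ?ltr0n // sum_gt0.
Qed.

Lemma PoE_gauss d K (D e : 'I_K -> R) : (0 < K)%N ->
  (forall k, 0 < D k) -> (forall k, 0 < e k) ->
  PoE (fun k (x : d.-tuple R) => D k * expR (- e k * sqnorm x)) =
  fun x => (J (ebar e) ^+ d)^-1 * expR (- ebar e * sqnorm x).
Proof.
move=> K0 D0 e0.
set P := (\prod_k D k) `^ K%:R^-1.
have P0 : 0 < P by apply: powR_gt0; apply: prodr_gt0 => k _.
have U : PoE_unnorm (fun k (x : d.-tuple R) => D k * expR (- e k * sqnorm x)) =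
   fun x => P * expR (- ebar e * sqnorm x).
  apply: funext => x; rewrite /PoE_unnorm big_split /= -expR_sum.
  rewrite powRM ?prodr_ge0 ?expR_ge0 // => [|k _]; last exact: ltW.
  rewrite -expRM; congr (_ * expR _).
  rewrite /ebar.
  have -> : \sum_(i < K) - e i * sqnorm x = - (\sum_k e k) * sqnorm x.
    by rewrite mulNr mulr_suml -sumrN; apply: eq_bigr => k _; rewrite mulNr.
  ring.
apply: funext => x; rewrite /PoE U.
have -> : (fun y : d.-tuple R => (P * expR (- ebar e * sqnorm y))%:E) =
  (fun y : d.-tuple R => (P * expR (- ebar e * \sum_(i < d) (tnth y i - (fun _ => 0) i) ^+ 2))%:E).
  by apply: funext => y; rewrite sqnorm_sum.
rewrite (@intRd_gauss d (ebar e) P (fun _ => 0)) ?ebar_gt0 ?ltW //=.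
have J0 : 0 < J (ebar e) ^+ d by rewrite exprn_gt0 // J_gt0 // ebar_gt0.
by field; rewrite !gt_eqF.
Qed.

Definition gam (beta : R -> R) t := expR (- Bint beta t).
Definition ss (beta : R -> R) t := 1 - expR (- (2 * Bint beta t)).
Definition Ef beta t (b : R) := b / (gam beta t ^+ 2 + 2 * ss beta t * b).
Definition aa beta t (b : R) := b + gam beta t ^+ 2 / (2 * ss beta t).
Definition Ld beta t d (C0 b : R) :=
  C0 * (Num.sqrt (2 * pi * ss beta t)) ^- d * J (aa beta t b) ^+ d.

Lemma gam2 beta t : expR (- (2 * Bint beta t)) = gam beta t ^+ 2.
Proof. by rewrite /gam -expRM_natl mulrN. Qed.

Lemma ss_gt0 beta t : 0 < Bint beta t -> 0 < ss beta t.
Proof.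
by move=> B0; rewrite /ss subr_gt0 expR_lt1 oppr_lt0 mulr_gt0.
Qed.

Lemma gam_gt0 beta t : 0 < gam beta t.
Proof. exact: expR_gt0. Qed.

Lemma diffuse_gauss d beta t (C0 b : R) : 0 < Bint beta t -> 0 < C0 -> 0 < b ->
  vp_diffuse beta t (fun y : d.-tuple R => C0 * expR (- b * sqnorm y)) =
  fun x => Ld beta t d C0 b * expR (- Ef beta t b * sqnorm x).
Proof.
move=> B0 C00 b0; apply: funext => x.
have s0 := @ss_gt0 beta t B0; have g0 := gam_gt0 beta t.
set g := gam beta t; set s := ss beta t.
have a0 : 0 < aa beta t b by rewrite /aa addr_gt0 // divr_gt0 ?exprn_gt0 ?mulr_gt0.
rewrite /vp_diffuse /gauss_density.
have sE : 1 - g ^+ 2 = s by rewrite /s /ss gam2.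
rewrite -/(gam beta t) gam2 -/g sE.
have -> : (fun y : d.-tuple R => (C0 * expR (- b * sqnorm y) *
    ((Num.sqrt (2 * pi * s)) ^- d *
     expR (- sqnorm (tsub x (tscale g y)) / (2 * s))))%:E) =
  (fun y : d.-tuple R => ((C0 * (Num.sqrt (2 * pi * s)) ^- d * expR (- Ef beta t b * sqnorm x)) *
     expR (- aa beta t b * \sum_(i < d) (tnth y i - (fun i : nat => g / (g ^+ 2 + 2 * s * b) * nth 0 x i) i) ^+ 2))%:E).
  apply: funext => y; congr EFin.
  rewrite -!mulrA; congr (_ * _); rewrite mulrCA; congr (_ * _).
  rewrite -!expRD; congr expR.
  rewrite /sqnorm -!sumrN !mulr_sumr !mulr_suml -!big_split /=.
  apply: eq_bigr => i _.
  rewrite !tnth_mktuple (tnth_nth 0 x) /Ef /aa -/g -/s.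
  field.
  by apply/andP; split; rewrite gt_eqF // ?addr_gt0 ?exprn_gt0 ?mulr_gt0.
rewrite (@intRd_gauss d (aa beta t b) _ (fun i : nat => g / (g ^+ 2 + 2 * s * b) * nth 0 x i)) //; last first.
  by rewrite !mulr_ge0 ?expR_ge0 ?invr_ge0 ?exprn_ge0 ?sqrtr_ge0 ?ltW.
by rewrite /= /Ld -/g -/s; ring.
Qed.


Lemma Bint_gt0 (beta : R -> R) (T t : R) :
  measurable_fun `[0, T] beta ->
  (forall s, 0 <= s <= T -> 0 < beta s) ->
  mu.-integrable `[0, T] (fun s => (beta s)%:E) ->
  0 < t <= T -> 0 < Bint beta t.
Proof.
move=> mb bp ib /andP[t0 tT].
have sub : `[0, t] `<=` `[0, T].
  by move=> x /=; rewrite !in_itv /= => /andP[x0 xt]; rewrite x0 /= (le_trans xt).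
have bp' : forall x, x \in `[0, t] -> 0 < beta x.
  by move=> x hx; apply: bp; move: (sub x hx); rewrite /= in_itv.
have it : mu.-integrable `[0, t] (fun s => (beta s)%:E).
  exact: integrableS ib.
have fin : (\int[mu]_(x in `[0%R, t]) (beta x)%:E)%E \is a fin_num by apply: integrable_fin_num.
have ge0 : (0 <= \int[mu]_(x in `[0%R, t]) (beta x)%:E)%E.
  by apply: integral_ge0 => x hx; rewrite lee_fin ltW // bp'.
have ne0 : (\int[mu]_(x in `[0%R, t]) (beta x)%:E)%E != 0%E.
  apply/eqP => h0.
  have mbt : measurable_fun `[0, t] (fun s => (beta s)%:E).
    by apply/measurable_EFinP; exact: measurable_funS mb.
  have := (ae_eq_integral_abs mu (measurable_itv _) mbt).1.
  have -> : (\int[mu]_(x in `[0%R, t]) `|(beta x)%:E|)%E = 0%E.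
    rewrite -h0; apply: eq_integral => x hx; rewrite gee0_abs // lee_fin ltW // bp'//.
    by move: hx; rewrite inE.
  move=> /(_ erefl) [N [mN muN sN]].
  have : (mu `[0%R, t] <= mu N)%E.
    apply: le_measure; rewrite ?inE //.
    move=> x hx; apply: sN => /= /(_ hx) /eqP; rewrite eqe; apply/negP.
    by rewrite gt_eqF // bp' //; exact: mem_set.
  rewrite muN lebesgue_measure_itv /= lte_fin t0 oppr0 adde0 lee_fin.
  by rewrite leNgt t0.
rewrite /Bint; apply: fine_gt0; apply/andP; split.
  by rewrite lt0e ne0.
by move: fin; rewrite fin_numE => /andP[_ ?]; rewrite ltey.
Qed.



Lemma sum_gt0' K (r : 'I_K -> R) k0 : (forall k, 0 <= r k) -> 0 < r k0 -> 0 < \sum_k r k.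
Proof.
move=> r0 rk0; rewrite (bigD1 k0) //=.
have h2 : 0 <= \sum_(i | i != k0) r i by apply: sumr_ge0 => i _.
lra.
Qed.

Lemma concave_strict K (g s : R) (b : 'I_K -> R) : 0 < g -> 0 < s ->
  (forall k, 0 < b k) -> (exists k l, b k != b l) ->
  ebar (fun k => b k / (g + 2 * s * b k)) < ebar b / (g + 2 * s * ebar b).
Proof.
move=> g0 s0 b0 [k [l bkl]].
have K0 : (0 < K)%N := leq_ltn_trans (leq0n k) (ltn_ord k).
set m := ebar b.
have m0 : 0 < m.
  rewrite /m /ebar mulr_gt0 ?invr_gt0 ?ltr0n //.
  by apply: (@sum_gt0' _ _ k) => // i; exact: ltW.
have B0 : 0 < g + 2 * s * m by rewrite addr_gt0 // mulr_gt0 // mulr_gt0.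
pose r i := 2 * s * g * (b i - m) ^+ 2 / ((g + 2 * s * b i) * (g + 2 * s * m) ^+ 2).
have A0 i : 0 < g + 2 * s * b i by rewrite addr_gt0 // mulr_gt0 // mulr_gt0.
have id i : b i / (g + 2 * s * b i) =
   m / (g + 2 * s * m) + g / (g + 2 * s * m) ^+ 2 * (b i - m) - r i.
  rewrite /r; field.
  by rewrite !gt_eqF.
have r0 i : 0 <= r i.
  rewrite /r; apply: divr_ge0; last by rewrite ltW // mulr_gt0 // exprn_gt0.
  by rewrite mulr_ge0 ?sqr_ge0 // ltW // mulr_gt0 // mulr_gt0.
have [j mj] : exists j, b j != m.
  case: (eqVneq (b k) m) => hk; last by exists k.
  by exists l; rewrite -hk eq_sym.
have rj : 0 < r j.
  rewrite /r; apply: divr_gt0; last by rewrite mulr_gt0 // exprn_gt0.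
  apply: mulr_gt0; first by rewrite mulr_gt0 // mulr_gt0.
  by rewrite exprn_even_gt0 //= subr_eq0.
have sr := @sum_gt0' _ r j r0 rj.
have Sb : \sum_k b k = K%:R * m.
  by rewrite /m /ebar mulrA mulfV ?mul1r // pnatr_eq0 -lt0n.
have Kp : 0 < K%:R :> R by rewrite ltr0n.
have S : \sum_k b k / (g + 2 * s * b k) = K%:R * (m / (g + 2 * s * m)) - \sum_i r i.
  rewrite (eq_bigr _ (fun i _ => id i)) sumrB big_split /= sumr_const card_ord.
  rewrite -mulr_sumr sumrB Sb sumr_const card_ord.
  ring.
rewrite /ebar S mulrBr mulKf ?gt_eqF //.
have : 0 < K%:R^-1 * \sum_i r i by rewrite mulr_gt0 ?invr_gt0.
lra.
Qed.

Lemma Ld_gt0 beta t d (C0 b : R) : 0 < Bint beta t -> 0 < C0 -> 0 < b ->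
  0 < Ld beta t d C0 b.
Proof.
move=> B0 C00 b0; have s0 := @ss_gt0 beta t B0; have g0 := gam_gt0 beta t.
have a0 : 0 < aa beta t b by rewrite /aa addr_gt0 // divr_gt0 ?exprn_gt0 ?mulr_gt0.
rewrite /Ld mulr_gt0 ?exprn_gt0 ?J_gt0 // mulr_gt0 // invr_gt0 exprn_gt0 //.
by rewrite sqrtr_gt0 mulr_gt0 // mulr_gt0 // pi_gt0.
Qed.

Lemma Ef_gt0 beta t (b : R) : 0 < Bint beta t -> 0 < b -> 0 < Ef beta t b.
Proof.
move=> B0 b0; have s0 := @ss_gt0 beta t B0; have g0 := gam_gt0 beta t.
by rewrite /Ef divr_gt0 // addr_gt0 ?exprn_gt0 // mulr_gt0 // mulr_gt0.
Qed.

Lemma sqnorm0 d : sqnorm [tuple (0:R) | i < d] = 0.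
Proof. by rewrite /sqnorm big1 // => i _; rewrite tnth_mktuple expr0n. Qed.

Lemma sqnorm1 d : sqnorm [tuple (1:R) | i < d] = d%:R.
Proof.
rewrite /sqnorm (eq_bigr (fun _ => 1)) => [|i _]; last by rewrite tnth_mktuple expr1n.
by rewrite sumr_const card_ord.
Qed.

End S.

Theorem proposition2 (R : realType) (d K : nat) (alpha : 'I_K -> R)
    (beta : R -> R) (T t : R) :
  (0 < d)%N -> (1 < K)%N ->
  (forall k, 0 < alpha k) ->
  measurable_fun `[0, T] beta ->
  (forall s, 0 <= s <= T -> 0 < beta s) ->
  (@lebesgue_measure R).-integrable `[0, T] (fun s => (beta s)%:E) ->
  0 < t <= T ->
  (exists k l, alpha k != alpha l) ->
  vp_diffuse beta t (PoE (fun k => @gauss_density R d (alpha k)))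
    <> PoE (fun k => vp_diffuse beta t (@gauss_density R d (alpha k))).
Proof.
move=> d0 K1 a0 mb bp ib tt [k [l akl]].
have B0 := @Bint_gt0 R beta T t mb bp ib tt.
have K0 : (0 < K)%N := ltnW K1.
pose b := fun k => (2 * alpha k)^-1.
pose D := fun k => (Num.sqrt (2 * pi * alpha k)) ^- d.
have b0 : forall k, 0 < b k by move=> i; rewrite /b invr_gt0 mulr_gt0.
have D0 : forall k, 0 < D k.
  by move=> i; rewrite /D invr_gt0 exprn_gt0 // sqrtr_gt0 mulr_gt0 // mulr_gt0 // pi_gt0.
have GE j : @gauss_density R d (alpha j) = (fun x => D j * expR (- b j * sqnorm x)).
  apply: funext => x; rewrite /gauss_density /D /b; congr (_ * expR _).
  by rewrite !mulNr mulrC.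
have RE : (fun k => vp_diffuse beta t (@gauss_density R d (alpha k))) =
   (fun k x => Ld beta t d (D k) (b k) * expR (- Ef beta t (b k) * sqnorm x)).
  by apply: funext => i; rewrite GE diffuse_gauss.
have LE : (fun k => @gauss_density R d (alpha k)) =
   (fun k x => D k * expR (- b k * sqnorm x)).
  by apply: funext => i; rewrite GE.
rewrite RE LE (@PoE_gauss R d K D b K0 D0 b0).
have Ce : 0 < (J (ebar b) ^+ d)^-1.
  by rewrite invr_gt0 exprn_gt0 // J_gt0 // (@ebar_gt0 R K b K0 b0).
rewrite (@diffuse_gauss R d beta t _ _ B0 Ce (@ebar_gt0 R K b K0 b0)).
rewrite (@PoE_gauss R d K (fun k => Ld beta t d (D k) (b k)) (fun k => Ef beta t (b k)) K0);
  last 2 first.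
- by move=> i; apply: Ld_gt0.
- by move=> i; apply: Ef_gt0.
move=> H.
have H0 := congr1 (fun f => f [tuple (0:R) | i < d]) H.
have H1 := congr1 (fun f => f [tuple (1:R) | i < d]) H.
simpl in H0, H1.
rewrite sqnorm0 !mulr0 expR0 !mulr1 in H0.
rewrite sqnorm1 -H0 in H1.
have L1 : 0 < Ld beta t d (J (ebar b) ^+ d)^-1 (ebar b) by apply: Ld_gt0 => //; exact: (@ebar_gt0 R K b K0 b0).
have L1n : Ld beta t d (J (ebar b) ^+ d)^-1 (ebar b) != 0 by rewrite gt_eqF.
move/(mulfI L1n)/expR_inj in H1.
have dn : (d%:R : R) != 0 by rewrite pnatr_eq0 -lt0n.
move/(mulIf dn)/oppr_inj in H1.
have g0 : 0 < gam beta t ^+ 2 by rewrite exprn_gt0 // gam_gt0.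
have bkl : b k != b l.
  apply/negP => /eqP /invr_inj h; move/negP: akl; apply; apply/eqP; lra.
have := @concave_strict R K (gam beta t ^+ 2) (ss beta t) b g0 (@ss_gt0 R beta t B0) b0
  (ex_intro _ k (ex_intro _ l bkl)).
rewrite /Ef in H1; rewrite -H1.
by rewrite ltxx.
Qed.
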